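(* Assume the standing assumptions below and let $s>0$. Then every solution $(\phi_1,\phi_2,\phi_3)$ of (TW) (nonnegative, bounded, $C^1$) satisfies $(\phi_1,\phi_2,\phi_3)(z)\to(0,0,0)$ as $z\to-\infty$.
   Context: Standing assumptions. $d_1,d_2,d_3,r_1,r_2,r_3,a,b,h,k$ are positive constants with $a>1$, $0<h,k<1$, $0<b<\frac{1}{2(a-1)}$. For $i=1,2,3$ the kernel $J_i:\mathbb{R}\to\mathbb{R}$ satisfies: (J1) $J_i\ge0$ is Lebesgue measurable, $\int_{\mathbb{R}}J_i=1$, and there are $\eta_i>0$ and $y_i^-<0<y_i^+$ such that $J_i>0$ on $(y_i^--\eta_i,y_i^-+\eta_i)$ and on $(y_i^+-\eta_i,y_i^++\eta_i)$; (J2) $\int_{\mathbb{R}}J_i(y)\,y\,dy=0$; (J3) there are $-\infty\le\tilde\lambda_i<0<\hat\lambda_i\le+\infty$ such that $I_i(\lambda):=\int_{\mathbb{R}}J_i(y)e^{\lambda y}dy<+\infty$ for $\lambda\in(\tilde\lambda_i,\hat\lambda_i)$ and $I_i(\lambda)\to+\infty$ as $\lambda\downarrow\tilde\lambda_i$ and as $\lambda\uparrow\hat\lambda_i$. $\alpha:\mathbb{R}\to\mathbb{R}$ is continuous and satisfies: ($\alpha$1) $\alpha$ has finite limits $\alpha(\pm\infty)$ with $\alpha(-\infty)<0<\alpha(+\infty)$, and $\alpha(z)\le\alpha(+\infty)$ for all $z$; ($\alpha$2) there exist $C>0$, $\rho>0$ with $\alpha(+\infty)-\alpha(z)\le Ce^{-\rho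 z}$ for all sufficiently large $z$. For a function $\phi$ and $i\in\{1,2,3\}$, $\mathcal N_i[\phi](z):=\int_{\mathbb{R}}J_i(y)\phi(z-y)dy-\phi(z)$. For $s>0$, system (TW) is $$\begin{cases}-s\phi_1'=d_1\mathcal N_1[\phi_1]+r_1\phi_1[-1-\phi_1-k\phi_2+a\phi_3],\\ -s\phi_2'=d_2\mathcal N_2[\phi_2]+r_2\phi_2[-1-h\phi_1-\phi_2+a\phi_3],\\ -s\phi_3'=d_3\mathcal N_3[\phi_3]+r_3\phi_3[\alpha(z)-b\phi_1-b\phi_2-\phi_3],\end{cases}\quad z\in\mathbb{R},$$ and a solution means a triple of nonnegative bounded $C^1(\mathbb{R})$ functions satisfying it. *)

(* Defs.v *)
From HB Require Import structures.
From mathcomp Require Import all_boot all_order all_algebra.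
From mathcomp Require Import all_classical all_reals all_analysis.
Set Implicit Arguments. Unset Strict Implicit. Unset Printing Implicit Defensive.
Import Order.TTheory GRing.Theory Num.Theory.
Import numFieldNormedType.Exports.
Local Open Scope classical_set_scope.
Local Open Scope ring_scope.

Section Defs.
Variable R : realType.
Notation mu := (@lebesgue_measure R).

Definition Ilap (J : R -> R) (l : R) : \bar R :=
  (\int[mu]_(y in setT) (J y * expR (l * y))%:E)%E.

Definition blowup_left (J : R -> R) (lt : \bar R) : Prop :=
  match lt with
  | EFin r => Ilap J x @[x --> r^'+] --> +oo%E
  | -oo%E => Ilap J x @[x --> -oo] --> +oo%E
  | +oo%E => False
  end.

Definition blowup_right (J : R -> R) (lh : \bar R) : Prop :=
  match lh with
  | EFin r => Ilap J x @[x --> r^'-] --> +oo%E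
  | +oo%E => Ilap J x @[x --> +oo] --> +oo%E
  | -oo%E => False
  end.

Definition kernel_ok (J : R -> R) : Prop :=
  [/\ (forall y, 0 <= J y) /\ measurable_fun setT J,
      (\int[mu]_(y in setT) (J y)%:E = 1)%E,
      (exists (eta ym yp : R), [/\ 0 < eta, ym < 0, 0 < yp,
          (forall y, ym - eta < y < ym + eta -> 0 < J y) &
          (forall y, yp - eta < y < yp + eta -> 0 < J y)]),
      (mu.-integrable setT (fun y => (J y * y)%:E) /\
       (\int[mu]_(y in setT) (J y * y)%:E = 0)%E) &
      (exists (lt lh : \bar R), [/\ (lt < 0)%E, (0 < lh)%E,
          (forall l : R, (lt < l%:E)%E -> (l%:E < lh)%E -> (Ilap J l < +oo)%E),
          blowup_left J lt & blowup_right J lh])].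

Definition alpha_ok (alpha : R -> R) : Prop :=
  continuous alpha /\
  exists am ap : R,
    [/\ alpha z @[z --> -oo] --> am,
        alpha z @[z --> +oo] --> ap,
        am < 0 < ap,
        (forall z, alpha z <= ap) &
        exists C rho : R, [/\ 0 < C, 0 < rho &
          \forall z \near +oo, ap - alpha z <= C * expR (- rho * z)]].

Definition Nop (J phi : R -> R) (z : R) : R :=
  fine (\int[mu]_(y in setT) (J y * phi (z - y))%:E)%E - phi z.

Definition nonneg_bdd_C1 (phi : R -> R) : Prop :=
  [/\ (forall z, 0 <= phi z),
      (exists M : R, forall z, `|phi z| <= M),
      (forall z, derivable phi z 1) &
      continuous (derive1 phi)].

End Defs.

(* Main.v *)
Require Import Defs.
From HB Require Import structures.
From mathcomp Require Import all_boot all_order all_algebra.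
From mathcomp Require Import all_classical all_reals all_analysis.
From mathcomp Require Import measurable_realfun ring lra.
Import Order.TTheory GRing.Theory Num.Theory.
Import numFieldNormedType.Exports.
Local Open Scope classical_set_scope.
Local Open Scope ring_scope.

Lemma tail0 (R : realType) (J : R -> R) : (forall y, 0 <= J y) ->
  measurable_fun setT J ->
  (\int[@lebesgue_measure R]_(y in setT) (J y)%:E = 1)%E ->
  forall eps, 0 < eps -> exists n : nat,
  (\int[@lebesgue_measure R]_(y in setT)
     (J y * \1_(~` [set` `[- (n%:R), n%:R]]) y)%:E <= eps%:E)%E.
Proof.
move=> J0 mJ J1 eps e0.
pose A (n : nat) : set R := ~` [set` `[- (n%:R), n%:R]].
have mA n : measurable (A n) by apply: measurableC; exact: measurable_itv.
pose f_ n y := (J y * \1_(A n) y)%:E.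
have mf n : measurable_fun setT (f_ n).
  apply/measurable_EFinP; apply: measurable_funM => //.
have ind01 n y : 0 <= (\1_(A n) y : R) <= 1.
  by rewrite indicE; case: (_ \in _) => /=; rewrite ?lexx ?ler01.
have ig : (@lebesgue_measure R).-integrable setT (fun y => (J y)%:E).
  apply/integrableP; split; first exact/measurable_EFinP.
  under eq_integral => x _ do rewrite abse_EFin ger0_norm //.
  by rewrite J1 ltry.
have dc := @dominated_cvg _ _ _ (@lebesgue_measure R) setT measurableT f_ (cst 0%E)
  (fun y => (J y)%:E) mf _ (fun _ _ => erefl) ig _.
have {dc} dc : (\int[@lebesgue_measure R]_(y in setT) f_ n y)%E @[n --> \oo] --> 0%:E.
  have <- : (\int[@lebesgue_measure R]_(y in setT) (cst 0%E) y)%E = 0%:E by exact: integral0.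
  apply: dc.
  - move=> y _; apply: cvg_near_cst.
    near=> n; rewrite /f_ indicE memNset ?mulr0 //.
    rewrite /A /= => H; apply: H; rewrite /= in_itv /= -ler_norml; near: n; exact: nbhs_infty_ger.
  - move=> n y _; have /andP[i0 i1] := ind01 n y.
    rewrite abse_EFin lee_fin ger0_norm ?mulr_ge0 //.
    by rewrite -[leRHS]mulr1 ler_wpM2l.
move/fine_cvgP: dc => [fin dc].
move/cvgrPdist_lt: dc => /(_ eps e0) dc.
have [n _ hn] := filterS2 _ (fun n a b => conj a b) fin dc.
case: (hn n (leqnn n)) => fn; rewrite /= sub0r normrN => h.
exists n; rewrite -/(f_ n); rewrite -(fineK fn) lee_fin; apply: le_trans (ler_norm _) (ltW h).
Unshelve. all: by end_near.
Qed.

Lemma int_bound (R : realType) (J : R -> R) : (forall y, 0 <= J y) ->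
  measurable_fun setT J ->
  (\int[@lebesgue_measure R]_(y in setT) (J y)%:E = 1)%E ->
  forall eps, 0 < eps -> exists N : R, forall (phi : R -> R) (B c z : R),
  continuous phi -> (forall t, 0 <= phi t <= B) -> 0 <= c ->
  (forall t, t <= z + N -> phi t <= c) ->
  fine (\int[@lebesgue_measure R]_(y in setT) (J y * phi (z - y))%:E)%E <= c + B * eps.
Proof.
move=> J0 mJ J1 eps e0.
have [n hn] := @tail0 R J J0 mJ J1 _ e0.
exists n%:R => phi B c z cphi phiB c0 hc.
have B0 : 0 <= B by have /andP[h1 h2] := phiB 0; apply: le_trans h1 h2.
pose A : set R := ~` [set` `[- (n%:R), n%:R]].
have mA : measurable A by apply: measurableC; exact: measurable_itv.
have ind01 y : 0 <= (\1_A y : R) <= 1.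
  by rewrite indicE; case: (_ \in _) => /=; rewrite ?lexx ?ler01.
have mphi : measurable_fun setT (fun y : R => phi (z - y)).
  apply: continuous_measurable_fun => y.
  apply: continuous_comp; last exact: cphi.
  apply: continuousB; [exact: cvg_cst | exact: cvg_id].
have mJA : measurable_fun setT (fun y : R => J y * \1_A y) by apply: measurable_funM.
have le1 : (\int[@lebesgue_measure R]_(y in setT) (J y * phi (z - y))%:E <=
   \int[@lebesgue_measure R]_(y in setT) (c * J y + B * (J y * \1_A y))%:E)%E.
  apply: ge0_le_integral => //.
  - by move=> y _; rewrite lee_fin mulr_ge0 //; have /andP[] := phiB (z - y).
  - by apply/measurable_EFinP; apply: measurable_funM.
  - apply/measurable_EFinP; apply: measurable_funD; apply: measurable_funM => //.
  - move=> y _; rewrite lee_fin.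
    have /andP[p0 pB] := phiB (z - y).
    have Jy := J0 y.
    have [yA|yA] := pselect (A y).
      rewrite indicE mem_set // mulr1.
      have : J y * phi (z - y) <= J y * B by rewrite ler_wpM2l.
      have : 0 <= c * J y by rewrite mulr_ge0.
      lra.
    rewrite indicE memNset // mulr0 mulr0 addr0 [c * _]mulrC ler_wpM2l //.
    apply: hc; move: yA; rewrite /A /= => /contrapT; rewrite /= in_itv /= => /andP[h1 h2].
    lra.
have eq2 : (\int[@lebesgue_measure R]_(y in setT) (c * J y + B * (J y * \1_A y))%:E =
   c%:E * \int[@lebesgue_measure R]_(y in setT) (J y)%:E +
   B%:E * \int[@lebesgue_measure R]_(y in setT) (J y * \1_A y)%:E)%E.
  under eq_integral => y _ do rewrite EFinD EFinM (EFinM B).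
  rewrite ge0_integralD //.
  all: try (by move=> y _; rewrite -EFinM lee_fin ?mulr_ge0 //;
         have /andP[] := ind01 y; move=> *; rewrite ?mulr_ge0).
  all: try (by apply/measurable_EFinP; apply: measurable_funM).
  rewrite ge0_integralZl_EFin //; last exact/measurable_EFinP.
  rewrite ge0_integralZl_EFin //; last exact/measurable_EFinP.
  all: try (by move=> y _; rewrite lee_fin ?mulr_ge0 //;
         have /andP[] := ind01 y; move=> *; rewrite ?mulr_ge0).
rewrite eq2 J1 mule1 in le1.
have le2 : (c%:E + B%:E * \int[@lebesgue_measure R]_(y in setT) (J y * \1_A y)%:E <=
   (c + B * eps)%:E)%E.
  rewrite EFinD leeD2l // EFinM; apply: lee_wpmul2l => //.
move: (le_trans le1 le2).
case: (\int[@lebesgue_measure R]_(y in setT) (J y * phi (z - y))%:E)%E => //=.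
move=> _; apply: addr_ge0 => //; apply: mulr_ge0 => //; exact: ltW.
Qed.


Lemma tilt_deriv (R : realType) (f : R -> R) (c e eta : R) : 0 < e ->
  derivable f c 1 ->
  (forall t, c <= t <= c + e -> f t - eta * t <= f c - eta * c) ->
  derive1 f c <= eta.
Proof.
move=> e0 df hmax; rewrite derive1E.
rewrite ['D_1 f c]cvg_at_rightE; last exact: df.
apply: limr_le.
  rewrite -(cvg_at_rightE (fun h : R => h^-1 *: ((f \o shift c) _ - f c))) //.
  apply: cvg_trans df; apply: cvg_app.
  move=> A [r r0 Ar]; exists r => // x xr xgt0; apply: Ar => //.
  exact/lt0r_neq0.
near=> h.
have h0 : 0 < h by near: h; exists 1 => /=.
have he : h <= e.
  near: h; exists e => //= h; rewrite /= distrC subr0 => /ltW hle _.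
  exact: le_trans (ler_norm _) hle.
have := hmax (h + c).
rewrite lerDr (ltW h0) addrC lerD2l he => /(_ isT).
rewrite /= [_%:A]mulr1 /= => H.
rewrite /GRing.scale /= ler_pdivrMl // mulrC.
move: H; rewrite mulrDr (addrC h c); lra.
Unshelve. all: by end_near.
Qed.

Lemma key (R : realType) (J phi g : R -> R) (s d r : R) :
  0 < s -> 0 < d -> 0 < r -> (forall y, 0 <= J y) -> measurable_fun setT J ->
  (\int[@lebesgue_measure R]_(y in setT) (J y)%:E = 1)%E ->
  nonneg_bdd_C1 phi ->
  (exists2 del, 0 < del & \forall z \near -oo, g z <= - del) ->
  (forall z, - s * derive1 phi z = d * Nop J phi z + r * phi z * g z) ->
  phi z @[z --> -oo] --> 0.
Proof.
move=> s0 d0 r0 J0 mJ J1 [phi0 [B0 hB] dphi _] [del del0 hg] eq.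
have phiB t : phi t <= B0 by apply: le_trans (ler_norm _) (hB t).
have B00 : 0 <= B0 by apply: le_trans (phi0 0) (phiB 0).
have cphi : continuous phi.
  by move=> x; apply: differentiable_continuous; apply/derivable1_diffP.
pose E t := phi @` [set w | w <= t].
have Eub t : has_ubound (E t) by exists B0 => _ [w _ <-].
have Ene t : E t !=set0 by exists (phi t); exists t => /=.
pose S t := sup (E t).
have Sge w t : w <= t -> phi w <= S t.
  by move=> wt; apply: ub_le_sup => //; exists w.
have Sadh t eps : 0 < eps -> exists2 w, w <= t & S t - eps < phi w.
  move=> e0; have [_ [w wt <-] h] := sup_adherent e0 (conj (Ene t) (Eub t)).
  by exists w.
pose M := inf (range S).
have Slb : has_lbound (range S).
  by exists 0 => _ [t _ <-]; apply: le_trans (phi0 t) (Sge t t (lexx t)).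
have MS t : M <= S t by apply: ge_inf => //; exists t.
have M0 : 0 <= M.
  apply: lb_le_inf; first by exists (S 0), 0.
  by move=> _ [t _ <-]; apply: le_trans (phi0 t) (Sge t t (lexx t)).
have Mad eps : 0 < eps -> exists t, S t < M + eps.
  move=> e0; have [_ [t _ <-] h] := inf_adherent e0 (conj (ex_intro _ (S 0) (ex_intro2 _ _ 0 I erefl)) Slb).
  by exists t.
suff MZ : M = 0.
  apply/cvgrPdist_lt => eps e0.
  have [t ht] := Mad eps e0.
  exists t; split; first exact: num_real.
  move=> z zt; rewrite sub0r normrN ger0_norm //.
  by apply: le_lt_trans (Sge z t (ltW zt)) _; rewrite -[eps]add0r -MZ.
have [//|Mpos] := eqVneq M 0; have {Mpos}Mpos : 0 < M by rewrite lt_def Mpos M0.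
exfalso.
have [Zg hZg] : exists Zg, forall z, z <= Zg -> g z <= - del.
  case: hg => Zg [_ hZg]; exists (Zg - 1) => z zZ; apply: hZg; lra.
pose K := r * del * M.
have K0 : 0 < K by rewrite /K !mulr_gt0.
pose eps := Num.min (M / 2) (K / (12 * d)).
have eps0 : 0 < eps by rewrite lt_min !divr_gt0 // mulr_gt0.
have epsM : eps <= M / 2 by rewrite ge_min lexx.
have epsK : d * eps <= K / 12.
  have : eps <= K / (12 * d) by rewrite ge_min lexx orbT.
  rewrite ler_pdivlMr ?mulr_gt0 // => h.
  rewrite ler_pdivlMr //; lra.
pose eta := K / (8 * s).
have eta0 : 0 < eta by rewrite divr_gt0 // mulr_gt0.
have seta : s * eta = K / 8 by rewrite /eta; field; lra.
pose epsq := eps / (B0 + 1).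
have epsq0 : 0 < epsq by rewrite divr_gt0 //; lra.
have Beps : B0 * epsq <= eps.
  rewrite /epsq mulrA ler_pdivrMr; last lra.
  rewrite mulrDr mulr1; nra.
have [N hN] := @int_bound R J J0 mJ J1 _ epsq0.
have [t0 ht0] := Mad eps eps0.
have phiM t : t <= t0 -> phi t <= M + eps.
  by move=> tt; apply: ltW; apply: le_lt_trans (Sge t t0 tt) ht0.
pose z0 := Num.min (t0 - N) (Num.min t0 Zg).
have z0a : z0 <= t0 - N by rewrite ge_min lexx.
have z0b : z0 <= t0 by rewrite /z0 !ge_min lexx !orbT.
have z0c : z0 <= Zg by rewrite /z0 !ge_min lexx !orbT.
pose L := 2 * eps / eta.
have etaL : eta * L = 2 * eps by rewrite /L; field; lra.
have L0 : 0 < L by rewrite /L divr_gt0 // mulr_gt0.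
have [w wle phiw] := Sadh (z0 - L - 1) eps eps0.
have phiw' : M - eps < phi w by have := MS (z0 - L - 1); lra.
pose psi t := phi t - eta * t.
have wz0 : w <= z0 by lra.
have cpsi : {within `[w, z0], continuous psi}.
  apply: continuous_subspaceT => x; apply: continuousB; first exact: cphi.
  by apply: continuousM; [exact: cvg_cst| exact: cvg_id].
have [u uin umax] := EVT_max wz0 cpsi.
move: (uin); rewrite in_itv /= => /andP[wu uz0].
have psiz0 : psi z0 < psi w.
  rewrite /psi; have := phiM z0 z0b.
  have : eta * (z0 - w) >= eta * (L + 1) by rewrite ler_pM2l //; lra.
  rewrite mulrDr mulr1 etaL mulrBr; lra.
have uz : u < z0.
  rewrite lt_neqAle uz0 andbT; apply/eqP => uE.
  have := umax w; rewrite in_itv /= lexx wz0 => /(_ isT).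
  by rewrite uE; lra.
have du : derive1 phi u <= eta.
  apply: (@tilt_deriv R phi u (z0 - u) eta); first lra; first exact: dphi.
  move=> t /andP[ut tu]; apply: umax; rewrite in_itv /=; apply/andP; split; lra.
have phiu : M - eps < phi u.
  have := umax w; rewrite in_itv /= lexx wz0 => /(_ isT); rewrite /psi.
  have : eta * w <= eta * u by rewrite ler_pM2l.
  lra.
have phiu2 : phi u <= M + eps by apply: phiM; lra.
have gu : g u <= - del by apply: hZg; lra.
have phiBB t : 0 <= phi t <= B0 by rewrite phi0 phiB.
have I := hN phi B0 (M + eps) u cphi phiBB.
have {}I : fine (\int[@lebesgue_measure R]_(y in setT) (J y * phi (u - y))%:E)%E <= M + 2 * eps.
  have := I ltac:(lra) ltac:(by move=> t tu; apply: phiM; lra); lra.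
have equ := eq u; rewrite /Nop in equ.
set II := fine _ in I equ.
have h1 : d * (II - phi u) <= d * (3 * eps) by rewrite ler_pM2l //; lra.
have h3 : r * phi u * g u <= r * phi u * (- del).
  by rewrite ler_wpM2l // mulr_ge0 // ltW.
have h4 : r * del * (M / 2) <= r * del * phi u.
  by rewrite ler_wpM2l ?mulr_ge0 ?ltW //; lra.
have h4' : r * del * (M / 2) = K / 2 by rewrite /K; field.
have h5 : s * derive1 phi u <= s * eta by rewrite ler_pM2l.
have h6 : r * phi u * (- del) = - (r * del * phi u) by ring.
have h7 : - s * derive1 phi u = - (s * derive1 phi u) by ring.
have h8 : d * (3 * eps) = 3 * (d * eps) by ring.
lra.
Qed.
Theorem proposition2p3 (R : realType)
  (d1 d2 d3 r1 r2 r3 a b h k : R)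
  (J1 J2 J3 alpha : R -> R) (s : R)
  (phi1 phi2 phi3 : R -> R) :
  0 < d1 -> 0 < d2 -> 0 < d3 -> 0 < r1 -> 0 < r2 -> 0 < r3 ->
  1 < a -> 0 < h < 1 -> 0 < k < 1 -> 0 < b -> b < 1 / (2 * (a - 1)) ->
  kernel_ok J1 -> kernel_ok J2 -> kernel_ok J3 ->
  alpha_ok alpha ->
  0 < s ->
  nonneg_bdd_C1 phi1 -> nonneg_bdd_C1 phi2 -> nonneg_bdd_C1 phi3 ->
  (forall z, - s * derive1 phi1 z = d1 * Nop J1 phi1 z
        + r1 * phi1 z * (-1 - phi1 z - k * phi2 z + a * phi3 z)) ->
  (forall z, - s * derive1 phi2 z = d2 * Nop J2 phi2 z
        + r2 * phi2 z * (-1 - h * phi1 z - phi2 z + a * phi3 z)) ->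
  (forall z, - s * derive1 phi3 z = d3 * Nop J3 phi3 z
        + r3 * phi3 z * (alpha z - b * phi1 z - b * phi2 z - phi3 z)) ->
  [/\ phi1 z @[z --> -oo] --> 0,
      phi2 z @[z --> -oo] --> 0 &
      phi3 z @[z --> -oo] --> 0].
Proof.
move=> d10 d20 d30 r10 r20 r30 a1 /andP[h0 h1] /andP[k0 k1] b0 bb.
move=> [[J10 mJ1] J1i _ _ _] [[J20 mJ2] J2i _ _ _] [[J30 mJ3] J3i _ _ _].
move=> [calpha [am [ap [ham hap /andP[am0 ap0] aleap _]]]] s0 C1 C2 C3 e1 e2 e3.
have p1 := C1; have p2 := C2; have p3 := C3.
case: p1 => [ph10 _ _ _]; case: p2 => [ph20 _ _ _]; case: p3 => [ph30 _ _ _].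
have L3 : phi3 z @[z --> -oo] --> 0.
  apply: (@key R J3 phi3 (fun z => alpha z - b * phi1 z - b * phi2 z - phi3 z) s d3 r3) => //.
  exists (- am / 2); first lra.
  move/cvgrPdist_lt: ham => /(_ (- am / 2) ltac:(lra)).
  apply: filterS => z hz.
  rewrite distrC in hz; have := ler_norm (alpha z - am).
  have := ph10 z; have := ph20 z; have := ph30 z.
  have : 0 <= b * phi1 z by rewrite mulr_ge0 // ltW.
  have : 0 <= b * phi2 z by rewrite mulr_ge0 // ltW.
  lra.
have ev3 : \forall z \near -oo, a * phi3 z <= 1 / 2.
  move/cvgrPdist_lt: L3 => /(_ (1 / (2 * a)) ltac:(rewrite divr_gt0 //; lra)).
  apply: filterS => z; rewrite sub0r normrN => hz.
  have := ler_norm (phi3 z) => hn.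
  have : phi3 z <= 1 / (2 * a) by lra.
  rewrite ler_pdivlMr; last lra.
  lra.
split => //.
- apply: (@key R J1 phi1 (fun z => -1 - phi1 z - k * phi2 z + a * phi3 z) s d1 r1) => //.
  exists (1 / 2); first lra.
  apply: filterS ev3 => z hz.
  have := ph10 z; have : 0 <= k * phi2 z by rewrite mulr_ge0 // ltW.
  lra.
- apply: (@key R J2 phi2 (fun z => -1 - h * phi1 z - phi2 z + a * phi3 z) s d2 r2) => //.
  exists (1 / 2); first lra.
  apply: filterS ev3 => z hz.
  have := ph20 z; have : 0 <= h * phi1 z by rewrite mulr_ge0 // ltW.
  lra.
Qed.
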